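(* Let $d,r\in\mathbb{N}$, $n\geq 3$, and let $k$ be a nonnegative integer with $$k\leq \left(1+\binom{2(d+1)}{r-1}\right)^{-1}\left(\frac n2-1\right)-d-5.$$ Let $G$ and $H$ be graphs on $n$ vertices, each with average degree at most $d$. Suppose there are distinct vertices $u_1,\dots,u_{n-k}$ of $G$ and distinct vertices $w_1,\dots,w_{n-k}$ of $H$ such that $G-u_i\cong H-w_i$ for every $i\in[n-k]$. Then $G$ and $H$ contain the same number of cliques of size $r$. (That is, the number of $r$-cliques can be reconstructed from any deck missing at most the stated number of cards.)
   Context: All graphs are finite, simple and undirected. For a graph $G$ and $v\in V(G)$, the card $G-v$ is the graph obtained by deleting $v$ and all edges incident to it; the deck is the multiset of unlabelled cards. An $r$-clique is a set of $r$ pairwise adjacent vertices. The average degree of an $n$-vertex graph with $m$ edges is $2m/n$. *)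

(* Defs.v *)
From HB Require Import structures.
From mathcomp Require Import all_boot all_order all_algebra.
Set Implicit Arguments. Unset Strict Implicit. Unset Printing Implicit Defensive.

Definition simple_graph (n : nat) (e : rel 'I_n) : Prop :=
  symmetric e /\ irreflexive e.

Definition deg (n : nat) (e : rel 'I_n) (v : 'I_n) : nat := #|[set y | e v y]|.

Definition avg_deg (n : nat) (e : rel 'I_n) : rat :=
  ((\sum_(v : 'I_n) deg e v)%:R / n%:R)%R.

Definition is_clique (n : nat) (e : rel 'I_n) (S : {set 'I_n}) : bool :=
  [forall x in S, forall y in S, (x != y) ==> e x y].

Definition num_cliques (n : nat) (e : rel 'I_n) (r : nat) : nat :=
  #|[set S : {set 'I_n} | (#|S| == r) && is_clique e S]|.

(* The card G - u: vertex type = vertices other than u, induced adjacency. *)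
Definition card_vert (n : nat) (u : 'I_n) := {x : 'I_n | x != u}.

Definition cards_iso (n : nat) (e1 : rel 'I_n) (u : 'I_n) (e2 : rel 'I_n) (w : 'I_n) : Prop :=
  exists f : card_vert u -> card_vert w,
    bijective f /\
    forall x y : card_vert u, e1 (val x) (val y) = e2 (val (f x)) (val (f y)).

(* binom(m, r-1) with the convention binom(m, -1) = 0 *)
Definition binom_pred (m r : nat) : nat :=
  if r is r'.+1 then 'C(m, r') else 0.

(* Main.v *)
Require Import Defs.
From mathcomp Require Import all_boot all_order all_algebra.
From mathcomp Require Import zify ring lra.
Import GRing.Theory Num.Theory.
Set Implicit Arguments. Unset Strict Implicit. Unset Printing Implicit Defensive.

Definition cl n (e : rel 'I_n) r (S : {set 'I_n}) := (#|S| == r) && is_clique e S.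
Definition cnum n (e : rel 'I_n) r v := #|[set S | cl e r S && (v \in S)]|.
Definition cdel n (e : rel 'I_n) r u v := #|[set S | [&& cl e r S, v \in S & u \notin S]]|.
Definition Ndel n (e : rel 'I_n) r u := #|[set S | cl e r S && (u \notin S)]|.
Definition Aa n (e : rel 'I_n) r t := #|[set v | cnum e r v <= t]|.
Definition Adel n (e : rel 'I_n) r u t := #|[set v | (v != u) && (cdel e r u v <= t)]|.

Definition goodmap n (e1 : rel 'I_n) u e2 w (F : 'I_n -> 'I_n) :=
  [/\ injective F, F u = w & forall x y, x != u -> y != u -> e1 x y = e2 (F x) (F y)].

Lemma split_N n (e : rel 'I_n) r u : num_cliques e r = Ndel e r u + cnum e r u.
Proof.
rewrite /num_cliques -(cardsID [set S : {set 'I_n} | u \in S]) addnC; congr (_ + _); apply: eq_card => S;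
  by rewrite !inE /cl // andbC.
Qed.

Lemma clique_map n (e1 : rel 'I_n) u e2 w F (S : {set 'I_n}) : goodmap e1 u e2 w F -> u \notin S ->
  is_clique e1 S -> is_clique e2 (F @: S).
Proof.
case=> Finj Fu Fe uS /forallP H. apply/forallP => a; apply/implyP => /imsetP [x xS ->].
apply/forallP => b; apply/implyP => /imsetP [y yS ->]. apply/implyP => Fxy.
have xy : x != y by apply: contraNneq Fxy => ->.
have xu : x != u by apply: contraNneq uS => <-.
have yu : y != u by apply: contraNneq uS => <-.
rewrite -Fe //.
by move: (H x) => /implyP /(_ xS) /forallP /(_ y) /implyP /(_ yS) /implyP /(_ xy).
Qed.

Lemma cl_map n (e1 : rel 'I_n) r u e2 w F (S : {set 'I_n}) : goodmap e1 u e2 w F -> u \notin S ->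
  cl e1 r S -> cl e2 r (F @: S).
Proof.
move=> gm uS /andP [cS iS]; have [Finj _ _] := gm.
by rewrite /cl card_imset // cS (clique_map gm).
Qed.

Lemma notin_map n (e1 : rel 'I_n) u e2 w F (S : {set 'I_n}) : goodmap e1 u e2 w F -> u \notin S ->
  w \notin F @: S.
Proof. by case=> Finj <- _ uS; rewrite mem_imset. Qed.

Lemma cdel_le n (e1 : rel 'I_n) r u e2 w F x : goodmap e1 u e2 w F ->
  cdel e1 r u x <= cdel e2 r w (F x).
Proof.
move=> gm; have [Finj Fu Fe] := gm.
rewrite /cdel -(card_imset _ (imset_inj Finj)); apply: subset_leq_card.
apply/subsetP => T /imsetP [S]; rewrite inE => /and3P [clS xS uS] ->.
by rewrite inE (cl_map gm) // mem_imset // xS (notin_map gm).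
Qed.

Lemma Ndel_le n (e1 : rel 'I_n) r u e2 w F : goodmap e1 u e2 w F ->
  Ndel e1 r u <= Ndel e2 r w.
Proof.
move=> gm; have [Finj Fu Fe] := gm.
rewrite /Ndel -(card_imset _ (imset_inj Finj)); apply: subset_leq_card.
apply/subsetP => T /imsetP [S]; rewrite inE => /andP [clS uS] ->.
by rewrite inE (cl_map gm) // (notin_map gm).
Qed.

Lemma goodmap_inv n (e1 : rel 'I_n) u e2 w F (gm : goodmap e1 u e2 w F) :
  exists G, goodmap e2 w e1 u G /\ cancel F G.
Proof.
have [Finj Fu Fe] := gm.
exists (invF Finj); split; last exact: invF_f.
split.
- exact: (can_inj (f_invF Finj)).
- by rewrite -Fu invF_f.
move=> x y xw yw.
have Gx : invF Finj x != u by apply: contraNneq xw => E; have := f_invF Finj x; rewrite E Fu => <-.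
have Gy : invF Finj y != u by apply: contraNneq yw => E; have := f_invF Finj y; rewrite E Fu => <-.
by rewrite Fe // !f_invF.
Qed.

Lemma Adel_le n (e1 : rel 'I_n) r u e2 w F t : goodmap e1 u e2 w F ->
  Adel e1 r u t <= Adel e2 r w t.
Proof.
move=> gm; have [Finj Fu Fe] := gm.
have [G [gm' FG]] := goodmap_inv gm.
rewrite /Adel -(card_imset _ Finj); apply: subset_leq_card.
apply/subsetP => y /imsetP [x]; rewrite inE => /andP [xu cx] ->.
rewrite inE -Fu (inj_eq Finj) xu /=.
apply: (leq_trans _ cx); have := cdel_le r (F x) gm'; by rewrite FG Fu.
Qed.

Lemma iso_goodmap n (e1 : rel 'I_n) u e2 w : cards_iso e1 u e2 w -> exists F, goodmap e1 u e2 w F.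
Proof.
case=> f [fbij fe].
pose F x := odflt w (omap (fun y => val (f y)) (insub x : option (card_vert u))).
have Fu : F u = w by rewrite /F insubF // eqxx.
have Fx x (xu : x != u) : F x = val (f (Sub x xu)) by rewrite /F insubT.
exists F; split => //.
- move=> x y; case: (eqVneq x u) => [->|xu]; case: (eqVneq y u) => [->|yu] //.
  + rewrite Fu Fx => E; have := valP (f (Sub y yu)); by rewrite -E eqxx.
  + rewrite Fu Fx => E; have := valP (f (Sub x xu)); by rewrite E eqxx.
  + rewrite !Fx => /val_inj /(bij_inj fbij) /(congr1 val) //.
- by move=> x y xu yu; rewrite !Fx; exact: (fe (Sub x xu) (Sub y yu)).
Qed.

Lemma cdel_cnum n (e : rel 'I_n) r u v : cdel e r u v <= cnum e r v.
Proof.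
apply: subset_leq_card; apply/subsetP => S; rewrite !inE => /and3P [-> -> _] //.
Qed.

Lemma A_Adel n (e : rel 'I_n) r w t : Aa e r t <= Adel e r w t + 1.
Proof.
rewrite addnC; apply: leq_trans (_ : #|w |: [set v | (v != w) && (cdel e r w v <= t)]| <= _).
  apply: subset_leq_card; apply/subsetP => v; rewrite !inE => cv.
  apply/orP; case: (eqVneq v w) => [->|vw]; [by left | right].
  rewrite /=; exact: leq_trans (cdel_cnum _ _ _ _) cv.
by rewrite cardsU1 leq_add2r leq_b1.
Qed.

Lemma card_setU_le (T : finType) (A B : {set T}) : #|A :|: B| <= #|A| + #|B|.
Proof. by rewrite cardsU leq_subr. Qed.

Lemma Adel_A n (e : rel 'I_n) r u t : simple_graph e ->
  Adel e r u t <= Aa e r t + deg e u.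
Proof.
case=> esym eirr.
apply: leq_trans (card_setU_le [set v | cnum e r v <= t] [set y | e u y]).
apply: subset_leq_card; apply/subsetP => v; rewrite !inE => /andP [vu cv].
case euv: (e u v); rewrite ?orbT // orbF.
suff <- : cdel e r u v = cnum e r v by [].
apply: eq_card => S; rewrite !inE.
case: (boolP (u \in S)) => uS /=; last by rewrite andbT.
rewrite !andbF; symmetry; apply/negbTE/negP => /andP [/andP [_ /forallP cS] vS].
move: (cS v) => /implyP /(_ vS) /forallP /(_ u) /implyP /(_ uS) /implyP /(_ vu).
by rewrite esym euv.
Qed.

Lemma cnum_bound n (e : rel 'I_n) r v : simple_graph e ->
  cnum e r v <= binom_pred (deg e v) r.
Proof.
case=> esym eirr.
case: r => [|r] /=.
  rewrite leqn0 cards_eq0; apply/eqP/setP => S; rewrite !inE.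
  apply/negbTE/negP => /andP [/andP [/eqP /cards0_eq -> _]]; by rewrite inE.
rewrite /cnum /deg -cards_draws -(card_in_imset (f := fun S => S :\ v)).
  apply: subset_leq_card; apply/subsetP => T /imsetP [S]; rewrite inE.
  move=> /andP [/andP [/eqP cS /forallP clS] vS] ->; rewrite inE.
  apply/andP; split.
    apply/subsetP => y; rewrite !inE => /andP [yv yS].
    move: (clS v) => /implyP /(_ vS) /forallP /(_ y) /implyP /(_ yS) /implyP.
    by apply; rewrite eq_sym.
  by move: cS; rewrite (cardsD1 v) vS add1n => -[->].
move=> S1 S2; rewrite !inE => /andP [_ v1] /andP [_ v2] E.
by rewrite -(setD1K v1) E setD1K.
Qed.

Lemma cnt_lower n k (u : 'I_(n - k) -> 'I_n) (P : pred 'I_n) : k <= n -> injective u ->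
  #|[set v | P v]| <= #|[set i | P (u i)]| + k.
Proof.
move=> kn uinj.
apply: leq_trans (_ : #|u @: [set i | P (u i)] :|: ~: (u @: setT)| <= _).
  apply: subset_leq_card; apply/subsetP => v; rewrite !inE => Pv.
  case: (boolP (v \in u @: setT)) => [/imsetP [i _ vE] | ] /=; last by rewrite orbT.
  by move: Pv; rewrite orbF vE => Pv; apply: imset_f; rewrite inE.
apply: (@leq_trans (_ + _) _ _ (card_setU_le _ _)).
rewrite card_imset // leq_add2l cardsCs setCK card_imset // !card_ord cardsT card_ord; lia.
Qed.

Lemma cnt_upper n m (w : 'I_m -> 'I_n) (P : pred 'I_n) : injective w ->
  #|[set i | P (w i)]| <= #|[set v | P v]|.
Proof.
move=> winj; rewrite -(card_imset _ winj); apply: subset_leq_card.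
by apply/subsetP => v /imsetP [i]; rewrite !inE => Pi ->.
Qed.

Lemma sum_image n m (u : 'I_m -> 'I_n) (f : 'I_n -> nat) : injective u ->
  \sum_i f (u i) <= \sum_v f v.
Proof.
move=> uinj; rewrite -(big_imset _ (in2W uinj)) /= [X in _ <= X](bigID (fun v => v \in u @: xpredT)) /=.
exact: leq_addr.
Qed.

Lemma high_bound n (f : 'I_n -> nat) b : #|[set v | b <= f v]| * b <= \sum_v f v.
Proof.
rewrite -sum_nat_const [X in _ <= X](bigID (fun v => b <= f v)) /=.
apply: (leq_trans _ (leq_addr _ _)); rewrite big_mkcond [X in _ <= X]big_mkcond /=.
apply: leq_sum => v _; rewrite inE; by case: ifP.
Qed.

Lemma arith n k d C X h δ :
  2 * (C + 1) * (k + d + 5) + 2 <= n ->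
  X <= k + C * (k + (δ + 1)) -> n <= X + h -> h * (2 * d + 2) <= d * n ->
  (n - k) * δ <= d * n -> False.
Proof.
move=> Hk HX Hn Hh Hd.
have [m En] : exists m, n = m + k by exists (n - k); lia.
subst n; rewrite addnK in Hd.
have p1 := leq0n (C * k); have p2 := leq0n (C * d).
have h2 : 2 * h < m + k.
  rewrite ltnNge; apply/negP => H; have := leq_mul H (leqnn (d + 1)); lia.
have HC : C * (δ + 1) <= (C + 1) * (d + 5).
  case: (leqP δ (d + 4)) => hδ.
    have : C * (δ + 1) <= C * (d + 5) by rewrite leq_mul2l; apply/orP; right; lia.
    lia.
  have [e Ee] : exists e, δ = d + e by exists (δ - d); lia.
  subst δ.
  have E1 : m * e <= d * k by lia.
  have Ck : 2 * (C * k) <= m by lia.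
  have E2 : C * (m * e) <= C * (d * k) by rewrite leq_mul2l E1 orbT.
  have E2' : d * (2 * (C * k)) <= d * m by rewrite leq_mul2l Ck orbT.
  have E3 : m * (C * e) <= m * d by lia.
  have mpos : 0 < m by lia.
  have E4 : C * e <= d by move: E3; rewrite leq_pmul2l.
  lia.
lia.
Qed.

Lemma key n k d C (c1 c2 deg1 : 'I_n -> nat) (N1 N2 : nat)
  (u w : 'I_(n - k) -> 'I_n) :
  2 * (C + 1) * (k + d + 5) + 2 <= n ->
  \sum_v deg1 v <= d * n ->
  injective u -> injective w ->
  (forall i, N1 + c2 (w i) = N2 + c1 (u i)) ->
  (forall i t, #|[set v | c2 v <= t]| <= #|[set v | c1 v <= t]| + deg1 (u i) + 1) ->
  (forall v, deg1 v <= 2 * d + 1 -> c1 v <= C) ->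
  N1 <= N2.
Proof.
move=> Hk Hsum uinj winj Hc HA Hlow.
rewrite leqNgt; apply/negP => lt.
pose D := N1 - N2.
have D1 : 1 <= D by rewrite /D; lia.
have kn : k < n by lia.
have hcu i : c1 (u i) = c2 (w i) + D by have := Hc i; rewrite /D; lia.
pose A t := #|[set v | c1 v <= t]|.
have i0 : 'I_(n - k) by exists 0; lia.
have [i1 _ Hmin] := @arg_minnP _ i0 predT (fun i => deg1 (u i)) isT.
set δ := deg1 (u i1) in Hmin.
have Hδ : (n - k) * δ <= d * n.
  have S1 := sum_image deg1 uinj.
  have S2 : \sum_(i : 'I_(n - k)) δ <= \sum_i deg1 (u i) by apply: leq_sum => i _; exact: Hmin.
  move: S2; rewrite sum_nat_const card_ord; lia.
have step t : A (t + D) <= A t + k + (δ + 1).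
  have h1 : A (t + D) <= #|[set i | c1 (u i) <= t + D]| + k :=
    cnt_lower (fun v => c1 v <= t + D) (ltnW kn) uinj.
  have h2 : #|[set i | c1 (u i) <= t + D]| = #|[set i | c2 (w i) <= t]|.
    by apply: eq_card => i; rewrite !inE hcu leq_add2r.
  have h3 : #|[set i | c2 (w i) <= t]| <= #|[set v | c2 v <= t]| :=
    cnt_upper (fun v => c2 v <= t) winj.
  have h4 := HA i1 t.
  move: h1 h2 h3 h4; rewrite /A; lia.
have base : A D.-1 <= k.
  have h1 : A D.-1 <= #|[set i | c1 (u i) <= D.-1]| + k :=
    cnt_lower (fun v => c1 v <= D.-1) (ltnW kn) uinj.
  suff : #|[set i | c1 (u i) <= D.-1]| = 0 by lia.
  apply/eqP; rewrite cards_eq0; apply/eqP/setP => i; rewrite !inE hcu.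
  apply/negbTE; rewrite -ltnNge; lia.
have chain m : A (D.-1 + m * D) <= k + m * (k + (δ + 1)).
  elim: m => [|m IH]; first by rewrite mul0n !addn0.
  have E : D.-1 + m.+1 * D = D.-1 + m * D + D by rewrite mulSn; lia.
  rewrite E mulSn; have := step (D.-1 + m * D); lia.
have mono t t' : t <= t' -> A t <= A t'.
  move=> tt'; apply: subset_leq_card; apply/subsetP => v; rewrite !inE => H.
  exact: leq_trans H tt'.
have HX : A C <= k + C * (k + (δ + 1)).
  apply: leq_trans (chain C); apply: mono.
  have : C * 1 <= C * D by rewrite leq_mul2l D1 orbT.
  lia.
pose h := #|[set v | 2 * d + 2 <= deg1 v]|.
have Hn : n <= A C + h.
  have : #|[set: 'I_n]| <= #|[set v | c1 v <= C] :|: [set v | 2 * d + 2 <= deg1 v]|.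
    apply: subset_leq_card; apply/subsetP => v _; rewrite !inE.
    apply/orP; case: (leqP (2 * d + 2) (deg1 v)) => hv; [by right | left; apply: Hlow; lia].
  rewrite cardsT card_ord => H; apply: leq_trans H _; exact: card_setU_le.
have Hh : h * (2 * d + 2) <= d * n by apply: leq_trans (high_bound _ _) Hsum.
exact: (arith Hk HX Hn Hh Hδ).
Qed.

Lemma rat_conv (d n k C : nat) :
  (k%:R <= (n%:R / 2 - 1) / (1 + C%:R) - d%:R - 5 :> rat)%R ->
  2 * (C + 1) * (k + d + 5) + 2 <= n.
Proof.
move=> Hk.
have cpos : (0 < 1 + C%:R :> rat)%R by have := ler0n rat C; lra.
have H1 : ((k%:R + d%:R + 5) * (1 + C%:R) <= n%:R / 2 - 1 :> rat)%R.
  rewrite -ler_pdivlMr //; lra.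
rewrite -(ler_nat rat) !natrD !natrM !natrD; lra.
Qed.

Lemma avg_conv n (e : rel 'I_n) d : 0 < n -> (avg_deg e <= d%:R :> rat)%R ->
  \sum_v deg e v <= d * n.
Proof.
move=> n0; rewrite /avg_deg ler_pdivrMr ?ltr0n // -natrM ler_nat mulnC.
exact: id.
Qed.

Lemma binom_mono m m' r : m <= m' -> binom_pred m r <= binom_pred m' r.
Proof. by case: r => //= r; apply: leq_bin2l. Qed.

Unset Implicit Arguments.

Theorem theorem2p3 (d r n k : nat) (e1 e2 : rel 'I_n)
  (u w : 'I_(n - k) -> 'I_n) :
  3 <= n ->
  (k%:R <= (n%:R / 2 - 1) / (1 + (binom_pred (2 * (d + 1)) r)%:R)
            - d%:R - 5 :> rat)%R ->
  simple_graph e1 -> simple_graph e2 ->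
  (avg_deg e1 <= d%:R)%R -> (avg_deg e2 <= d%:R)%R ->
  injective u -> injective w ->
  (forall i : 'I_(n - k), cards_iso e1 (u i) e2 (w i)) ->
  num_cliques e1 r = num_cliques e2 r.
Proof.
move=> n3 Hk s1 s2 a1 a2 uinj winj Hiso.
have HkN := rat_conv Hk.
have n0 : 0 < n by lia.
have Hs1 := avg_conv n0 a1.
have Hs2 := avg_conv n0 a2.
have gms i : exists F G, goodmap e1 (u i) e2 (w i) F /\ goodmap e2 (w i) e1 (u i) G.
  have [F gm] := iso_goodmap (Hiso i).
  have [G [gm' _]] := goodmap_inv gm.
  by exists F, G.
have Nd i : Ndel e1 r (u i) = Ndel e2 r (w i).
  have [F [G [gF gG]]] := gms i.
  by apply/eqP; rewrite eqn_leq (Ndel_le r gF) (Ndel_le r gG).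
have Ad i t : Adel e1 r (u i) t = Adel e2 r (w i) t.
  have [F [G [gF gG]]] := gms i.
  by apply/eqP; rewrite eqn_leq (Adel_le r t gF) (Adel_le r t gG).
have Hc i : num_cliques e1 r + cnum e2 r (w i) = num_cliques e2 r + cnum e1 r (u i).
  rewrite (split_N e1 r (u i)) (split_N e2 r (w i)) Nd; lia.
have HA12 i t : #|[set v | cnum e2 r v <= t]| <= #|[set v | cnum e1 r v <= t]| + deg e1 (u i) + 1.
  have h1 := A_Adel e2 r (w i) t.
  have h2 := Adel_A r (u i) t s1.
  rewrite /Aa -Ad in h1 h2; lia.
have HA21 i t : #|[set v | cnum e1 r v <= t]| <= #|[set v | cnum e2 r v <= t]| + deg e2 (w i) + 1.
  have h1 := A_Adel e1 r (u i) t.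
  have h2 := Adel_A r (w i) t s2.
  rewrite /Aa Ad in h1 h2; lia.
have low1 v : deg e1 v <= 2 * d + 1 -> cnum e1 r v <= binom_pred (2 * (d + 1)) r.
  move=> hv; apply: leq_trans (cnum_bound r v s1) (binom_mono r _); lia.
have low2 v : deg e2 v <= 2 * d + 1 -> cnum e2 r v <= binom_pred (2 * (d + 1)) r.
  move=> hv; apply: leq_trans (cnum_bound r v s2) (binom_mono r _); lia.
apply/eqP; rewrite eqn_leq; apply/andP; split.
  exact: (key HkN Hs1 uinj winj Hc HA12 low1).
have Hc' i : num_cliques e2 r + cnum e1 r (u i) = num_cliques e1 r + cnum e2 r (w i) by rewrite Hc.
exact: (key HkN Hs2 winj uinj Hc' HA21 low2).
Qed.
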